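(* (i) Let $r\geq 3$, let $p_1,\dots,p_r$ be distinct odd primes, $n=p_1\cdots p_r$ and $D=\{p_1,\dots,p_r\}$. Then the circulant graph $G(n;S)$ with $S=\bigcup_{d\in D}G_n(d)$ has diameter $2$. (ii) Let $p_1,\dots,p_r$ be distinct odd primes, $m=p_1\cdots p_r$, $n=2m^2$ and $D=\{(m/p_1)^2,\dots,(m/p_r)^2\}$. Then the circulant graph $G(n;S)$ with $S=\bigcup_{d\in D}G_n(d)$ has diameter $2r+1$.
   Context: For a divisor $d$ of $n$, $G_n(d)=\{k : 1\le k\le n-1,\ \gcd(k,n)=d\}$. For a set $S\subseteq\{1,\dots,n-1\}$ with $s\in S$ iff $n-s\in S$, the circulant graph $G(n;S)$ is the undirected graph on vertex set $\mathbb{Z}_n$ in which $i$ and $j$ are adjacent iff $i-j \bmod n\in S$. The diameter is the maximum over vertex pairs of the shortest-path distance. *)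

(* Defs.v *)
From mathcomp Require Import all_boot.
Set Implicit Arguments. Unset Strict Implicit. Unset Printing Implicit Defensive.

Definition Gn (n d k : nat) : bool := (0 < k < n) && (gcdn k n == d).

Definition Sunion (n : nat) (D : seq nat) (k : nat) : bool :=
  has (fun d => Gn n d k) D.

(* Circulant graph G(n;S) on vertex set Z_n = {0,...,n-1}:
   i ~ j iff (i - j) mod n lies in S. *)
Definition circ_adj (n : nat) (S : pred nat) (i j : nat) : bool :=
  S ((i + (n - j)) %% n).

Definition walk (n : nat) (S : pred nat) (k i j : nat) : Prop :=
  exists s : seq nat, [/\ size s = k, all (fun v => v < n) s,
                          path (circ_adj n S) i s & last i s = j].

Definition is_dist (n : nat) (S : pred nat) (i j k : nat) : Prop :=
  walk n S k i j /\ (forall l, l < k -> ~ walk n S l i j).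

Definition has_diameter (n : nat) (S : pred nat) (d : nat) : Prop :=
  (forall i j, i < n -> j < n -> exists2 k, k <= d & is_dist n S i j k) /\
  (exists i j, [/\ i < n, j < n & is_dist n S i j d]).

(* Main.v *)
Require Import Defs.
From mathcomp Require Import all_boot.
From mathcomp Require Import zify.
From Stdlib Require Import Classical.
Set Implicit Arguments. Unset Strict Implicit. Unset Printing Implicit Defensive.

                      


Lemma mod_dvd d n a b : d %| n -> a = b %[mod n] -> a = b %[mod d].
Proof. by move=> dn H; rewrite -(modn_dvdm a dn) H modn_dvdm. Qed.

Lemma sub_mod n a b c : b <= n -> b + c = a %[mod n] -> (a + (n - b)) %% n = c %% n.
Proof.
move=> bn H.
rewrite -modnDml -H modnDml -addnA [c + _]addnC addnA subnKC //.
by rewrite addnC modnDr.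
Qed.

Lemma walk_of_sum n (S : pred nat) i j ss : 0 < n -> i < n -> j < n ->
  all S ss -> all (fun s => s < n) ss -> j + sumn ss = i %[mod n] ->
  walk n S (size ss) i j.
Proof.
move=> n0; elim: ss i => [|s ss IH] i iN jN /=.
  move=> _ _; rewrite addn0 !modn_small // => ->.
  by exists [::].
case/andP=> Ss Sss /andP[sn sns] H.
set v := (i + (n - s)) %% n.
have vn : v < n by rewrite ltn_pmod.
have Hv : j + sumn ss = v %[mod n].
  by rewrite /v modn_mod (@sub_mod n i s (j + sumn ss)) ?(ltnW sn) // addnCA.
have [s' [H1 H2 H3 H4]] := IH v vn jN Sss sns Hv.
exists (v :: s'); split => /=.
- by rewrite H1.
- by rewrite vn.
- rewrite H3 andbT /circ_adj.
  rewrite (@sub_mod n i v s) ?(ltnW vn) ?(modn_small sn) //.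
  by rewrite /v modnDml -addnA subnK ?(ltnW sn) // modnDr.
- by [].
Qed.

Lemma sum_of_walk n (S : pred nat) k i j : 0 < n -> walk n S k i j ->
  exists ss, [/\ size ss = k, all S ss & j + sumn ss = i %[mod n]].
Proof.
move=> n0 [s [<- Hall Hp Hl]].
elim: s i Hall Hp Hl => [|v s IH] i /= Hall Hp Hl.
  by exists [::]; rewrite addn0 Hl.
case/andP: Hall => vn Hall; case/andP: Hp => Hiv Hp.
have [ss [H1 H2 H3]] := IH v Hall Hp Hl.
exists (((i + (n - v)) %% n) :: ss); split => /=.
- by rewrite H1.
- by rewrite H2 andbT; apply: Hiv.
- by rewrite addnCA -modnDmr H3 modnDmr modnDml -addnA subnK ?(ltnW vn) // modnDr.
Qed.

Lemma dist_exists n S i j k : walk n S k i j -> exists2 k', k' <= k & is_dist n S i j k'.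
Proof.
elim/ltn_ind: k => k IH Hw.
case: (classic (exists l, l < k /\ walk n S l i j)) => [[l [Hl Hwl]] | Hno].
  have [k' Hk' Hd] := IH l Hl Hwl.
  by exists k' => //; apply: leq_trans Hk' (ltnW Hl).
exists k => //; split => // l Hl Hw'.
by apply: Hno; exists l.
Qed.

                      



Lemma prime_in_prod p ps : prime p -> all prime ps ->
  p %| \prod_(q <- ps) q -> p \in ps.
Proof.
move=> pp; elim: ps => [|q ps IH] /=.
  by rewrite big_nil dvdn1 => _ /eqP p1; move: pp; rewrite p1.
case/andP=> qp aps; rewrite big_cons Euclid_dvdM // in_cons.
case/orP=> [|/(IH aps) ->]; last by rewrite orbT.
by rewrite dvdn_prime2 // => ->.
Qed.

Lemma coprime_prod k ps : (forall p, p \in ps -> coprime k p) ->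
  coprime k (\prod_(q <- ps) q).
Proof.
elim: ps => [|q ps IH] H; first by rewrite big_nil coprimen1.
rewrite big_cons coprimeMr H ?mem_head //= IH // => p pin.
by apply: H; rewrite in_cons pin orbT.
Qed.

Lemma prod_gt0 ps : all prime ps -> 0 < \prod_(q <- ps) q.
Proof.
elim: ps => [|q ps IH] /=; first by rewrite big_nil.
by case/andP=> qp aps; rewrite big_cons muln_gt0 prime_gt0 // IH.
Qed.

Lemma prod_split q ps : q \in ps -> uniq ps ->
  \prod_(p <- ps) p = q * \prod_(p <- ps | p != q) p.
Proof. by move=> qin u; rewrite (bigD1_seq q) . Qed.

Lemma dvd_prod q ps : q \in ps -> uniq ps -> q %| \prod_(p <- ps) p.
Proof. by move=> qin u; rewrite (prod_split qin u) dvdn_mulr. Qed.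

Lemma coprime_rest k q ps : all prime ps ->
  (forall p, p \in ps -> p != q -> ~~ (p %| k)) ->
  coprime k (\prod_(p <- ps | p != q) p).
Proof.
move=> aps H; rewrite -big_filter; apply: coprime_prod => p.
rewrite mem_filter => /andP[pq pin].
by rewrite coprime_sym prime_coprime ?H //; move/allP: aps; apply.
Qed.

Lemma not_dvd_rest q ps : prime q -> all prime ps -> uniq ps ->
  q \in ps -> ~~ (q %| \prod_(p <- ps | p != q) p).
Proof.
move=> qp aps u qin; rewrite -big_filter; apply/negP => /(prime_in_prod qp) H.
suff : q \in [seq p <- ps | p != q] by rewrite mem_filter eqxx.
by apply: H; apply/allP => p; rewrite mem_filter => /andP[_]; move/allP: aps; apply.
Qed.

Lemma crt (ps : seq nat) (f : nat -> nat) : uniq ps -> all prime ps ->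
  exists y, forall p, p \in ps -> y = f p %[mod p].
Proof.
elim: ps => [|q ps IH] /=; first by exists 0.
case/andP=> qnin u /andP[qp aps].
have [y' Hy'] := IH u aps.
have cop : coprime q (\prod_(p <- ps) p).
  by rewrite prime_coprime //; apply/negP => /(prime_in_prod qp) => /(_ aps); rewrite (negbTE qnin).
exists (chinese q (\prod_(p <- ps) p) (f q) y') => p; rewrite in_cons.
case/orP=> [/eqP -> | pin]; first by rewrite chinese_modl.
rewrite -Hy' //; apply: mod_dvd (dvd_prod pin u) _.
by rewrite chinese_modr.
Qed.

Lemma class1 ps q k : uniq ps -> all prime ps -> q \in ps ->
  k < \prod_(p <- ps) p -> q %| k ->
  (forall p, p \in ps -> p != q -> ~~ (p %| k)) ->
  (exists2 p, p \in ps & p != q) -> Gn (\prod_(p <- ps) p) q k.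
Proof.
move=> u aps qin kn qk H [p0 p0in p0q].
rewrite /Gn kn andbT; apply/andP; split.
  rewrite lt0n; apply/negP => /eqP k0.
  by move: (H p0 p0in p0q); rewrite k0 dvdn0.
rewrite (prod_split qin u) Gauss_gcdl; last exact: coprime_rest.
by rewrite gcdnC; apply/eqP/gcdn_idPl.
Qed.

                      

Lemma prime_odd_ndvd2 p : prime p -> odd p -> ~~ (p %| 2 * 1).
Proof.
move=> pp op; rewrite muln1 dvdn_prime2 //; apply/negP => /eqP p2.
by move: op; rewrite p2.
Qed.

Lemma gen1 ps q1 q2 x : uniq ps -> all prime ps -> all odd ps ->
  q1 \in ps -> q2 \in ps ->
  (exists2 p, p \in ps & p != q1) -> (exists2 p, p \in ps & p != q2) ->
  (if q1 == q2 then q1 %| x else ~~ (q1 %| x) && ~~ (q2 %| x)) ->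
  exists a b, [/\ Gn (\prod_(p <- ps) p) q1 a, Gn (\prod_(p <- ps) p) q2 b
                & a + b = x %[mod \prod_(p <- ps) p]].
Proof.
move=> u aps ops q1in q2in ex1 ex2 Hx.
set n := \prod_(p <- ps) p.
have n0 : 0 < n := prod_gt0 aps.
pose f p := if p == q1 then 0 else if p == q2 then x else if p %| x then 1 else 2 * x.
have [y Hy] := crt f u aps.
set a := y %% n; set b := (x + (n - a)) %% n.
have an : a < n by rewrite ltn_pmod.
have bn : b < n by rewrite ltn_pmod.
have Hab : a + b = x %[mod n].
  by rewrite /b modnDmr addnCA subnKC ?(ltnW an) // modnDr.
have dvdp p : p \in ps -> p %| n by move=> pin; apply: dvd_prod.
have Ha p : p \in ps -> (p %| a) = (p %| f p).
  by move=> pin; rewrite /dvdn -Hy // /a -(modn_dvdm y (dvdp p pin)).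
have Hb p : p \in ps -> (p %| b) = (x == f p %[mod p]).
  move=> pin; rewrite -Hy // -(modn_dvdm y (dvdp p pin)) -/a.
  have := mod_dvd (dvdp p pin) Hab => H.
  by rewrite /dvdn -H -{2}[a]addn0 eqn_modDl mod0n.
have pP p : p \in ps -> prime p /\ odd p.
  by move=> pin; split; [move/allP: aps | move/allP: ops]; apply.
exists a, b; split => //.
- apply: class1 => //; first by rewrite Ha // /f eqxx dvdn0.
  move=> p pin pq1; have [pp op] := pP p pin.
  rewrite Ha // /f (negbTE pq1).
  case: ifP => [/eqP pq2 | _].
    move: Hx; rewrite pq2 in pq1; rewrite eq_sym (negbTE pq1) => /andP[_].
    by rewrite pq2.
  case: ifP => [_ | /negbT px].
    by rewrite dvdn1; apply/negP => /eqP p1; move: pp; rewrite p1.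
  by rewrite Euclid_dvdM // negb_or px andbT -{1}(muln1 2) prime_odd_ndvd2.
- apply: class1 => //.
    rewrite Hb // /f; case: ifP => [/eqP q21 | _]; last by rewrite eqxx.
    by move: Hx; rewrite q21 eqxx => /eqP; rewrite /dvdn mod0n => ->.
  move=> p pin pq2; have [pp op] := pP p pin.
  rewrite Hb // /f (negbTE pq2).
  case: ifP => [/eqP pq1 | _].
    move: Hx; rewrite -pq1 (negbTE pq2) => /andP[px _].
    by rewrite mod0n.
  case: ifP => [px | /negbT px].
    move: px; rewrite /dvdn => /eqP ->; rewrite modn_small ?prime_gt1 //.
  apply/negP; rewrite mul2n -addnn -{1}[x]addn0 eqn_modDl mod0n eq_sym => H.
  by move: px; rewrite /dvdn H.
Qed.

                      

Lemma odd_prod ps : all odd ps -> odd (\prod_(q <- ps) q).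
Proof.
elim: ps => [|q ps IH] /=; first by rewrite big_nil.
by case/andP=> oq ops; rewrite big_cons oddM oq IH.
Qed.

Lemma odd_rest q ps : all odd ps -> odd (\prod_(p <- ps | p != q) p).
Proof.
move=> ops; rewrite -big_filter; apply: odd_prod.
by apply/allP => p; rewrite mem_filter => /andP[_]; move/allP: ops; apply.
Qed.

Lemma cq_eq ps q : uniq ps -> all prime ps -> q \in ps ->
  \prod_(p <- ps) p %/ q = \prod_(p <- ps | p != q) p.
Proof.
move=> u aps qin; rewrite (prod_split qin u) mulKn //.
by apply: prime_gt0; move/allP: aps; apply.
Qed.

Lemma n_split ps q : uniq ps -> q \in ps ->
  2 * (\prod_(p <- ps) p) ^ 2 = (\prod_(p <- ps | p != q) p) ^ 2 * (2 * q ^ 2).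
Proof.
move=> u qin; rewrite (prod_split qin u) expnMn.
by rewrite [RHS]mulnC mulnA.
Qed.

Lemma dvd_rest p q ps : uniq ps -> p \in ps -> p != q ->
  p %| \prod_(r <- ps | r != q) r.
Proof.
move=> u pin pq; rewrite -big_filter; apply: dvd_prod; last exact: filter_uniq.
by rewrite mem_filter pq.
Qed.

                                             
Lemma classII_char ps q s : uniq ps -> all prime ps -> all odd ps -> q \in ps ->
  Gn (2 * (\prod_(p <- ps) p) ^ 2) ((\prod_(p <- ps) p %/ q) ^ 2) s ->
  [/\ odd s, ~~ (q %| s) & forall p, p \in ps -> p != q -> p ^ 2 %| s].
Proof.
move=> u aps ops qin.
have qp : prime q by move/allP: aps; apply.
rewrite cq_eq // (n_split u qin) /Gn.
set c := \prod_(p <- ps | p != q) p.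
case/andP=> /andP[s0 sn] /eqP g.
have c0 : 0 < c by move: (odd_rest q ops); rewrite -/c; case: (c).
have ds : c ^ 2 %| s by rewrite -g dvdn_gcdl.
have [u' su] : exists u', s = c ^ 2 * u' by exists (s %/ c ^ 2); rewrite mulnC divnK.
rewrite su -muln_gcdr in g.
have g1 : gcdn u' (2 * q ^ 2) = 1.
  by apply/eqP; rewrite -(eqn_pmul2l (_ : 0 < c ^ 2)) ?expn_gt0 ?c0 // muln1 g.
have : coprime u' (2 * q ^ 2) by rewrite /coprime g1.
rewrite coprimeMr coprime_pexpr // coprimen2 => /andP[ou cu].
rewrite coprime_sym prime_coprime // in cu.
split.
- by rewrite su oddM oddX odd_rest.
- rewrite su Euclid_dvdM // negb_or cu andbT Euclid_dvdX //.
  by rewrite andbT (not_dvd_rest qp aps u qin).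
- move=> p pin pq; rewrite su dvdn_mulr // dvdn_exp2r //.
  exact: dvd_rest.
Qed.

Lemma classII_mk ps q r : uniq ps -> all prime ps -> all odd ps -> q \in ps ->
  ~~ (q %| r) ->
  exists e, Gn (2 * (\prod_(p <- ps) p) ^ 2) ((\prod_(p <- ps) p %/ q) ^ 2) e
            /\ e = r %[mod q ^ 2].
Proof.
move=> u aps ops qin qr.
have qp : prime q by move/allP: aps; apply.
have oq : odd q by move/allP: ops; apply.
rewrite cq_eq // (n_split u qin) /Gn.
set c := \prod_(p <- ps | p != q) p.
have oc : odd c by apply: odd_rest.
have c0 : 0 < c by move: oc; case: (c).
set d := c ^ 2.
have d0 : 0 < d by rewrite expn_gt0 c0.
have cop : coprime (q ^ 2) (2 * d).
  rewrite coprime_pexpl // coprimeMr coprime_pexpr // !prime_coprime //.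
  rewrite dvdn_prime2 // (not_dvd_rest qp aps u qin) andbT.
  by apply/eqP => q2; move: oq; rewrite q2.
set N := d * (2 * q ^ 2).
have N0 : 0 < N by rewrite /N; have := prime_gt0 qp; nia.
set ch := chinese (q ^ 2) (2 * d) r d.
exists (ch %% N).
have q2N : q ^ 2 %| N by rewrite /N; apply/dvdn_mull/dvdn_mull.
have dN : 2 * d %| N by rewrite /N mulnA [d * 2]mulnC dvdn_mulr.
have Hr : ch %% N = r %[mod q ^ 2].
  by rewrite (modn_dvdm ch q2N) chinese_modl.
have Hd : (ch %% N) %% (2 * d) = d.
  rewrite (modn_dvdm ch dN) chinese_modr // modn_small //.
  by rewrite mul2n -addnn -{1}[d]addn0 ltn_add2l.
split => //.
set e := ch %% N.
have [k ek] : exists k, e = d * (2 * k + 1).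
  exists (e %/ (2 * d)); rewrite {1}(divn_eq e (2 * d)) Hd.
  set k := e %/ (2 * d); nia.
have en : e < N by rewrite ltn_pmod.
rewrite en andbT ek muln_gt0 d0 /= /N -muln_gcdr.
have -> : gcdn (2 * k + 1) (2 * q ^ 2) = 1.
  apply/eqP; rewrite -/(coprime _ _) coprimeMr coprime_pexpr // coprimen2.
  rewrite oddD oddM /= coprime_sym prime_coprime //.
  apply/negP => qk; move: qr; rewrite -(dvdn_addr _ (dvdn0 q)).
  have qq2 : q %| q ^ 2 by rewrite dvdn_exp.
  rewrite /dvdn -(modn_dvdm r qq2) -Hr (modn_dvdm _ qq2) -/e ek.
  by rewrite -/(dvdn _ _) dvdn_mull.
by rewrite muln1 addn1 eqxx.
Qed.

                      

Lemma arith1 y Q : 4 <= Q -> y + Q - 2 + 1 = y + Q - 1.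
Proof. lia. Qed.

Lemma rep2 q t y : prime q -> odd q -> 2 <= t ->
  exists R, [/\ size R = t, all (fun r => ~~ (q %| r)) R & sumn R = y %[mod q ^ 2]].
Proof.
move=> qp oq.
have q1 : ~~ (q %| 1) by rewrite dvdn1; apply/negP => /eqP q1; move: qp; rewrite q1.
have q2 : ~~ (q %| 2) by rewrite dvdn_prime2 //; apply/negP => /eqP q2; move: oq; rewrite q2.
have Q4 : 4 <= q ^ 2 by rewrite -mulnn; exact: (leq_mul (prime_gt1 qp) (prime_gt1 qp)).
move: (q ^ 2) Q4 => Q Q4.
elim: t y => [|[|t] IH] y // _.
case: t IH => [|t] IH.
  pose u1 := if q %| (y + Q - 1) then 2 else 1.
  have u1Q : u1 <= Q by rewrite /u1; case: ifP => _; timeout 15 lia.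
  exists [:: u1; y + Q - u1]; split => //=.
    rewrite andbT; apply/andP; split; first by rewrite /u1; case: ifP.
    rewrite /u1; case: ifP => H; last by rewrite H.
    apply/negP => H2.
    have : q %| (y + Q - 2) + 1 by rewrite arith1.
    by rewrite dvdn_addr // (negbTE q1).
  by rewrite addn0 addnC subnK ?modnDr // (leq_trans u1Q (leq_addl _ _)).
have [R [H1 H2 H3]] := IH (y + Q - 1) isT.
exists (1 :: R); split => /=; first by rewrite H1.
  by rewrite q1.
rewrite -modnDmr H3 modnDmr addnC subnK; last timeout 15 lia.
by rewrite modnDr.
Qed.

Lemma rep q t y : prime q -> odd q ->
  (t = 0 /\ q ^ 2 %| y) \/ (t = 1 /\ ~~ (q %| y)) \/ 2 <= t ->
  exists R, [/\ size R = t, all (fun r => ~~ (q %| r)) R & sumn R = y %[mod q ^ 2]].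
Proof.
move=> qp oq [[-> Hy] | [[-> Hy] | Ht]].
- exists [::]; split => //=; move: Hy; rewrite /dvdn => /eqP ->.
  by rewrite mod0n.
- by exists [:: y]; rewrite /= Hy addn0.
- exact: rep2.
Qed.

Lemma dvd_sumn k s : (forall e, e \in s -> k %| e) -> k %| sumn s.
Proof.
elim: s => [|e s IH] H /=; first by rewrite dvdn0.
apply: dvdn_add; first by apply: H; rewrite mem_head.
by apply: IH => e' e's; apply: H; rewrite in_cons e's orbT.
Qed.

Lemma odd_sumn s : all odd s -> odd (sumn s) = odd (size s).
Proof.
elim: s => [|e s IH] //= /andP[oe os].
by rewrite oddD oe IH.
Qed.

Lemma sumn_filterC (a : pred nat) s :
  sumn s = sumn (filter a s) + sumn (filter (predC a) s).
Proof.
elim: s => [|e s IH] //=; case: (a e) => /=; rewrite IH; timeout 15 lia.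
Qed.

Lemma sum_bool (T : Type) (ps : seq T) (b : T -> bool) :
  \sum_(q <- ps) b q = count b ps.
Proof.
elim: ps => [|q ps IH]; first by rewrite big_nil.
by rewrite big_cons IH.
Qed.

Lemma sum_lb (ps : seq nat) (f : nat -> nat) a :
  (forall q, q \in ps -> a <= f q) -> a * size ps <= \sum_(q <- ps) f q.
Proof.
elim: ps => [|q ps IH] H; first by rewrite muln0.
rewrite big_cons /= mulnS leq_add ?H ?mem_head // IH // => p pin.
by apply: H; rewrite in_cons pin orbT.
Qed.

Lemma sum_ub (ps : seq nat) (f : nat -> nat) a :
  (forall q, q \in ps -> f q <= a) -> \sum_(q <- ps) f q <= a * size ps.
Proof.
elim: ps => [|q ps IH] H; first by rewrite big_nil.
rewrite big_cons /= mulnS leq_add ?H ?mem_head // IH // => p pin.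
by apply: H; rewrite in_cons pin orbT.
Qed.

Lemma crt_sq ps a b : uniq ps -> all prime ps ->
  (forall q, q \in ps -> a = b %[mod q ^ 2]) ->
  a = b %[mod (\prod_(q <- ps) q) ^ 2].
Proof.
elim: ps => [|q ps IH] /=.
  by move=> _ _ _; rewrite big_nil exp1n !modn1.
case/andP=> qnin u /andP[qp aps] H.
rewrite big_cons expnMn; apply/eqP; rewrite chinese_remainder; last first.
  rewrite coprime_pexpl // coprime_pexpr // prime_coprime //.
  by apply/negP => /(prime_in_prod qp) => /(_ aps); rewrite (negbTE qnin).
rewrite (H q (mem_head _ _)) eqxx /=; apply/eqP; apply: IH => // p pin.
by apply: H; rewrite in_cons pin orbT.
Qed.

                      

Definition mII ps := \prod_(q <- ps) q.
Definition nII ps := 2 * (mII ps) ^ 2.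
Definition SII ps := Sunion (nII ps) [seq (mII ps %/ q) ^ 2 | q <- ps].

Lemma lift_list ps q R : uniq ps -> all prime ps -> all odd ps -> q \in ps ->
  all (fun r => ~~ (q %| r)) R ->
  exists E, [/\ size E = size R, all (Gn (nII ps) ((mII ps %/ q) ^ 2)) E
              & sumn E = sumn R %[mod q ^ 2]].
Proof.
move=> u aps ops qin; elim: R => [|r R IH] /=; first by exists [::].
case/andP=> qr HR.
have [e [He1 He2]] := classII_mk u aps ops qin qr.
have [E [H1 H2 H3]] := IH HR.
exists (e :: E); split => /=; first by rewrite H1.
  by rewrite H2 andbT; apply: He1.
by rewrite -modnDm He2 H3 modnDm.
Qed.

Definition valid q t x := (t = 0 /\ q ^ 2 %| x) \/ (t = 1 /\ ~~ (q %| x)) \/ 2 <= t.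

Lemma build ps x (t : nat -> nat) L : uniq ps -> all prime ps -> all odd ps ->
  uniq L -> {subset L <= ps} -> (forall q, q \in L -> valid q (t q) x) ->
  exists ss, [/\ size ss = \sum_(q <- L) t q, all (SII ps) ss, all odd ss &
     forall p, p \in ps -> sumn ss = (if p \in L then x else 0) %[mod p ^ 2]].
Proof.
move=> u aps ops; elim: L => [|q L IH] /=.
  by move=> _ _ _; exists [::]; rewrite big_nil.
case/andP=> qnin uL sub Hv.
have qin : q \in ps by apply: sub; rewrite mem_head.
have qp : prime q by move/allP: aps; apply.
have oq : odd q by move/allP: ops; apply.
have [ss' [H1 H2 H3 H4]] : exists ss, [/\ size ss = \sum_(q <- L) t q, all (SII ps) ss, all odd ss &
     forall p, p \in ps -> sumn ss = (if p \in L then x else 0) %[mod p ^ 2]].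
  apply: IH => // [p pin|p pin]; [apply: sub | apply: Hv]; by rewrite in_cons pin orbT.
have [R [R1 R2 R3]] := @rep q (t q) x qp oq (Hv q (mem_head _ _)).
have [E [E1 E2 E3]] := lift_list u aps ops qin R2.
have Ech e : e \in E -> [/\ odd e, ~~ (q %| e) & forall p, p \in ps -> p != q -> p ^ 2 %| e].
  by move=> eE; apply: classII_char => //; move/allP: E2; apply.
exists (E ++ ss'); split.
- by rewrite size_cat E1 R1 H1 big_cons.
- rewrite all_cat H2 andbT; apply/allP => e eE.
  rewrite /SII /Sunion has_map; apply/hasP; exists q => //=.
  by move/allP: E2; apply.
- rewrite all_cat H3 andbT; apply/allP => e eE.
  by have [] := Ech e eE.
- move=> p pin; rewrite sumn_cat -modnDmr (H4 p pin) modnDmr in_cons.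
  case: (eqVneq p q) => [-> | pq] /=.
    by rewrite (negbTE qnin) addn0 E3 R3.
  rewrite -modnDml.
  have -> : sumn E %% p ^ 2 = 0.
    apply/eqP; rewrite -/(dvdn _ _); apply: dvd_sumn => e eE.
    by have [_ _ ->] := Ech e eE.
  by rewrite add0n.
Qed.

                      

Lemma mod_dvd' d n a b : d %| n -> a = b %[mod n] -> a = b %[mod d].
Proof. by move=> dn H; rewrite -(modn_dvdm a dn) H modn_dvdm. Qed.

Lemma upII ps x : 0 < size ps -> uniq ps -> all prime ps -> all odd ps ->
  exists ss, [/\ size ss <= 2 * size ps + 1, all (SII ps) ss & sumn ss = x %[mod nII ps]].
Proof.
case: ps => [//|q0 rest] _ u aps ops.
pose k q := if q ^ 2 %| x then 0 else if ~~ (q %| x) then 1 else 2.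
have kv q : valid q (k q) x.
  rewrite /valid /k; case: ifP => [H | _]; first by left.
  by case: ifP => [H | _]; [right; left | right; right].
have k2 q : k q <= 2 by rewrite /k; case: ifP => //; case: ifP.
set K := \sum_(q <- rest) k q.
pose t0 := if odd (k q0 + K) == odd x then k q0 else if k q0 == 0 then 3 else (k q0).+1.
pose t q := if q == q0 then t0 else k q.
have tv q : valid q (t q) x.
  rewrite /t; case: eqP => [-> | _]; last exact: kv.
  rewrite /t0; case: ifP => _; first exact: kv.
  right; right; case: ifP => // /negbT; rewrite -lt0n.
  by rewrite ltnS.
have [ss [H1 H2 H3 H4]] := @build (q0 :: rest) x t (q0 :: rest) u aps ops u (fun q qin => qin) (fun q _ => tv q).
have Hsize : size ss = t0 + K.
  rewrite H1 big_cons /t eqxx; congr (_ + _); apply: eq_big_seq => q qin.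
  by case: eqP => // qq0; move: u => /=; rewrite qq0 in qin; rewrite qin.
exists ss; split => //.
- have KK : K <= 2 * size rest by apply: sum_ub.
  have t03 : t0 <= 3 by rewrite /t0; have := k2 q0; case: (odd _ == _); case: (k q0 == 0); lia.
  rewrite Hsize /=; move: KK t03; move: (t0) (K) (size rest) => a b c; lia.
- have Hpar : sumn ss = x %[mod 2].
    rewrite !modn2 odd_sumn // Hsize /t0.
    case: ifP => [/eqP -> // | /negbT H]; case: ifP => [/eqP k0 | _].
      by move: H; rewrite k0 !oddD /=; case: (odd K); case: (odd x).
    by move: H; rewrite addSn /=; case: (odd (k q0 + K)); case: (odd x).
  have Hm : sumn ss = x %[mod (mII (q0 :: rest)) ^ 2].
    apply: crt_sq => // p pin; by rewrite H4 // pin.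
  rewrite /nII; apply/eqP; rewrite chinese_remainder; last first.
    by rewrite coprime_pexpr // coprime2n odd_prod.
  by rewrite Hpar Hm !eqxx.
Qed.

Lemma count_sum ps ss :
  (forall s, s \in ss -> count (fun q => ~~ (q %| s)) ps = 1) ->
  \sum_(q <- ps) count (fun s => ~~ (q %| s)) ss = size ss.
Proof.
elim: ss => [|s ss IH] H.
  by rewrite big1_seq.
rewrite /= (eq_bigr (fun q => ~~ (q %| s) + count (fun s => ~~ (q %| s)) ss)) //.
rewrite big_split /= sum_bool H ?mem_head // IH // => s' s'in.
by apply: H; rewrite in_cons s'in orbT.
Qed.

Lemma lowII ps ss : 0 < size ps -> uniq ps -> all prime ps -> all odd ps ->
  all (SII ps) ss -> sumn ss = mII ps %[mod nII ps] -> 2 * size ps + 1 <= size ss.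
Proof.
move=> sz u aps ops Hss HT.
have char s : s \in ss -> exists2 q, q \in ps &
    [/\ odd s, ~~ (q %| s) & forall p, p \in ps -> p != q -> p ^ 2 %| s].
  move=> sin; move/allP: Hss => /(_ s sin).
  rewrite /SII /Sunion has_map => /hasP [q qin Hq].
  by exists q => //; apply: classII_char.
have A q : q \in ps -> 2 <= count (fun s => ~~ (q %| s)) ss.
  move=> qin.
  have qp : prime q by move/allP: aps; apply.
  have q0 : 0 < q by apply: prime_gt0.
  have qq2 : q %| q ^ 2 by rewrite dvdn_exp.
  have q2n : q ^ 2 %| nII ps.
    by rewrite /nII; apply/dvdn_mull/dvdn_exp2r/dvd_prod.
  have HT2 := mod_dvd' q2n HT.
  have qm : q %| mII ps by apply: dvd_prod.
  have q2m : ~~ (q ^ 2 %| mII ps).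
    rewrite /mII (prod_split qin u) -mulnn dvdn_pmul2l //.
    exact: not_dvd_rest.
  set P := fun s => ~~ (q %| s).
  have HG : q ^ 2 %| sumn (filter (predC P) ss).
    apply: dvd_sumn => e; rewrite mem_filter => /andP[/negPn qe ein].
    have [q' q'in [_ q'e Hp]] := char e ein.
    apply: Hp => //; apply/eqP => qq'; move: q'e; by rewrite -qq' qe.
  rewrite leqNgt; apply/negP => Hc.
  move: HT2; rewrite (sumn_filterC P).
  rewrite -size_filter in Hc.
  case Ef: (filter P ss) Hc => [|e [|e' F]] // _.
    move=> /= H; move: q2m; rewrite /dvdn -H add0n.
    by move: HG; rewrite /dvdn => /eqP ->.
  move=> /= H.
  have ein : e \in filter P ss by rewrite Ef mem_head.
  move: ein; rewrite mem_filter => /andP[qe _]; move: qe; rewrite /P.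
  have qG : q %| sumn (filter (predC P) ss) := dvdn_trans qq2 HG.
  have := mod_dvd' qq2 H; move/eqP: qm => qm'; rewrite qm' addn0 => Hd.
  have Hd' : q %| e + sumn (filter (predC P) ss) by apply/eqP.
  by rewrite dvdn_addl // in Hd'; rewrite Hd'.
have B : \sum_(q <- ps) count (fun s => ~~ (q %| s)) ss = size ss.
  apply: count_sum => s sin.
  have [q0 q0in [_ q0s Hp]] := char s sin.
  rewrite (@eq_in_count _ _ (pred1 q0)) ?count_uniq_mem ?q0in // => q qin /=.
  case: eqP => [-> // | /eqP qq0].
  by rewrite (dvdn_trans (dvdn_exp _ _) (Hp q qin qq0)).
have L2 : 2 * size ps <= size ss.
  by rewrite -B; apply: sum_lb => q qin; exact: A q qin.
have oT : odd (sumn ss).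
  have := mod_dvd' (dvdn_mulr _ (dvdnn 2)) HT; rewrite !modn2 /mII odd_prod //.
  by case: (odd (sumn ss)).
have os : odd (size ss).
  rewrite -odd_sumn //; apply/allP => s sin.
  by have [q _ [? _ _]] := char s sin.
rewrite addn1 ltn_neqAle L2 andbT; apply/eqP => E; move: os.
by rewrite -E oddM.
Qed.

                      

Lemma diff_mod n i j : j <= n -> j + (i + (n - j)) %% n = i %[mod n].
Proof. by move=> jn; rewrite modnDmr addnCA subnKC // modnDr. Qed.

Lemma upI ps x : 2 <= size ps -> uniq ps -> all prime ps -> all odd ps ->
  exists a b, [/\ Sunion (\prod_(q <- ps) q) ps a, Sunion (\prod_(q <- ps) q) ps b,
     a < \prod_(q <- ps) q, b < \prod_(q <- ps) q & a + b = x %[mod \prod_(q <- ps) q]].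
Proof.
move=> sz u aps ops.
have fromG q k : q \in ps -> Gn (\prod_(q <- ps) q) q k ->
    Sunion (\prod_(q <- ps) q) ps k /\ k < \prod_(q <- ps) q.
  move=> qin Hg; split; first by apply/hasP; exists q.
  by case/andP: Hg => /andP[_ ->].
suff [a [b [q1 [q2 [q1in q2in [Ha Hb Hab]]]]]] : exists a b q1 q2,
    [/\ q1 \in ps, q2 \in ps & [/\ Gn (\prod_(q <- ps) q) q1 a,
       Gn (\prod_(q <- ps) q) q2 b & a + b = x %[mod \prod_(q <- ps) q]]].
  have [Sa an] := fromG _ _ q1in Ha; have [Sb bn] := fromG _ _ q2in Hb.
  by exists a, b.
case: ps sz u aps ops fromG => [|q1 [|q2 rest]] // _ u aps ops _.
have q12 : q1 != q2 by move: u => /= /andP[]; rewrite in_cons negb_or => /andP[].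
have in1 : q1 \in q1 :: q2 :: rest by rewrite mem_head.
have in2 : q2 \in q1 :: q2 :: rest by rewrite !in_cons eqxx orbT.
case: (boolP (has (fun q => q %| x) (q1 :: q2 :: rest))) => [/hasP [q qin qx] | /hasPn hn].
  have ex : exists2 p, p \in q1 :: q2 :: rest & p != q.
    case: (eqVneq q q1) => [-> | qq1].
      by exists q2 => //; rewrite eq_sym.
    by exists q1 => //; rewrite eq_sym.
  have hx : (if q == q then q %| x else ~~ (q %| x) && ~~ (q %| x)) by rewrite eqxx.
  have [a [b [Ha Hb Hab]]] := gen1 u aps ops qin qin ex ex hx.
  by exists a, b, q, q.
have ex1 : exists2 p, p \in q1 :: q2 :: rest & p != q1 by exists q2 => //; rewrite eq_sym.
have ex2 : exists2 p, p \in q1 :: q2 :: rest & p != q2 by exists q1.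
have hx : (if q1 == q2 then q1 %| x else ~~ (q1 %| x) && ~~ (q2 %| x)).
  by rewrite (negbTE q12) hn // hn.
have [a [b [Ha Hb Hab]]] := gen1 u aps ops in1 in2 ex1 ex2 hx.
by exists a, b, q1, q2.
Qed.

Lemma partI ps : 3 <= size ps -> uniq ps -> all prime ps -> all odd ps ->
  has_diameter (\prod_(q <- ps) q) (Sunion (\prod_(q <- ps) q) ps) 2.
Proof.
move=> sz u aps ops.
have n0 : 0 < \prod_(q <- ps) q := prod_gt0 aps.
have n1 : 1 < \prod_(q <- ps) q.
  case: ps sz u aps ops n0 => [|q ps] // _ u /andP[qp aps] _ n0.
  apply: leq_trans (prime_gt1 qp) (dvdn_leq n0 _).
  by apply: dvd_prod => //; rewrite mem_head.
have W i j : i < \prod_(q <- ps) q -> j < \prod_(q <- ps) q ->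
    walk (\prod_(q <- ps) q) (Sunion (\prod_(q <- ps) q) ps) 2 i j.
  move=> iN jN.
  have [a [b [Sa Sb an bn Hab]]] :=
    @upI ps ((i + (\prod_(q <- ps) q - j)) %% \prod_(q <- ps) q) (ltnW sz) u aps ops.
  apply: (@walk_of_sum _ _ _ _ [:: a; b]) => //=; first by rewrite Sa Sb.
    by rewrite an bn.
  by rewrite addn0 -modnDmr Hab modnDmr diff_mod // ltnW.
split.
  move=> i j iN jN; have [k' Hk Hd] := dist_exists (W i j iN jN).
  by exists k'.
exists 1, 0; split => //; split; first exact: W.
move=> l Hl Hw; have [ss [H1 H2 H3]] := sum_of_walk n0 Hw.
case: l Hl H1 Hw => [|[|l]] // _ H1 _.
  by case: ss H1 H2 H3 => // _ _ /=; rewrite !modn_small.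
case: ss H1 H2 H3 => [|s [|]] //= _ /andP[/hasP [q qin Hq] _].
move: Hq; rewrite /Gn => /andP[/andP[_ sn] /eqP g].
rewrite add0n addn0 !modn_small // => s1; move: g; rewrite s1 gcd1n => q1.
by move/allP: aps => /(_ q qin); rewrite -q1.
Qed.

Lemma partII ps : 0 < size ps -> uniq ps -> all prime ps -> all odd ps ->
  has_diameter (nII ps) (SII ps) (2 * size ps + 1).
Proof.
move=> sz u aps ops.
have m0 : 0 < mII ps := prod_gt0 aps.
have n0 : 0 < nII ps by rewrite /nII; move: m0; move: (mII ps) => m; nia.
have mn : mII ps < nII ps by rewrite /nII; move: m0; move: (mII ps) => m; nia.
have Sn s : SII ps s -> s < nII ps.
  rewrite /SII /Sunion has_map => /hasP [q _] /=.
  by rewrite /Gn => /andP[/andP[_ ->]].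
have W i j : i < nII ps -> j < nII ps ->
    exists2 k, k <= 2 * size ps + 1 & walk (nII ps) (SII ps) k i j.
  move=> iN jN.
  have [ss [Hs Hall Hsum]] := upII ((i + (nII ps - j)) %% nII ps) sz u aps ops.
  exists (size ss) => //.
  apply: walk_of_sum => //.
    by apply/allP => s sin; apply: Sn; move/allP: Hall; apply.
  by rewrite -modnDmr Hsum modnDmr diff_mod // ltnW.
have low l : walk (nII ps) (SII ps) l (mII ps) 0 -> 2 * size ps + 1 <= l.
  move=> Hw; have [ss [<- H2 H3]] := sum_of_walk n0 Hw.
  by apply: lowII => //; rewrite -H3 add0n.
split.
  move=> i j iN jN; have [k Hk Hw] := W i j iN jN.
  have [k' Hk' Hd] := dist_exists Hw.
  by exists k' => //; apply: leq_trans Hk' Hk.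
exists (mII ps), 0; split => //.
have [k Hk Hw] := W (mII ps) 0 mn n0.
have Ek : k = 2 * size ps + 1 by apply/eqP; rewrite eqn_leq Hk low.
split; first by rewrite -Ek.
move=> l Hl Hw'; have := low l Hw'; move: Hl; rewrite -Ek; lia.
Qed.

Theorem theorem5 :
  (forall ps : seq nat,
      3 <= size ps -> uniq ps -> all prime ps -> all odd ps ->
      let n := \prod_(q <- ps) q in
      has_diameter n (Sunion n ps) 2) /\
  (forall ps : seq nat,
      0 < size ps -> uniq ps -> all prime ps -> all odd ps ->
      let m := \prod_(q <- ps) q in
      let n := 2 * m ^ 2 in
      let D := [seq (m %/ q) ^ 2 | q <- ps] in
      has_diameter n (Sunion n D) (2 * size ps + 1)).
Proof.
split.
  by move=> ps sz u aps ops; exact: partI.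
by move=> ps sz u aps ops; exact: partII.
Qed.
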